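(* Let $n\geq2$, $p=2n-1$, $q=n$ and $k>\frac{2n-1}{n\sqrt{n-1}}$. Then the critical velocity is $$\overline{c}=\frac{kn+\sqrt{k^2n^2-4n}}{2n}.$$
   Context: Consider $u_t=u_{xx}+k(u^n)_x+u^p-u^q$; traveling waves $u=f(x+ct)$ satisfy $f''=cf'-knf^{n-1}f'-f^p+f^q$, equivalently the system $X'=Y$, $Y'=cY-knX^{n-1}Y-X^p+X^q$ ($X=f$, $Y=f'$) with critical points $P_1=(0,0)$, $P_2=(1,0)$. For each $c$, $l_c$ is the unique trajectory leaving $P_1$ (as $\xi\to-\infty$) into $\{X>0,Y>0\}$; it connects directly $P_1$ to $P_2$ if it tends to $P_2$ as $\xi\to\infty$ with $X>0,Y>0$ throughout. The critical velocity is $\overline{c}=\sup\{c: l_c\text{ connects directly }P_1\text{ and }P_2\}$. *)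

(* Defs.v *)
From Stdlib Require Import Reals.
From Coquelicot Require Import Coquelicot.
Open Scope R_scope.

Definition tw_solution (n p q : nat) (k c : R) (X Y : R -> R) : Prop :=
  forall t : R,
    is_derive X t (Y t) /\
    is_derive Y t (c * Y t - k * INR n * (X t) ^ (n - 1) * Y t
                   - (X t) ^ p + (X t) ^ q).

(* l_c connects directly P1 = (0,0) and P2 = (1,0): a trajectory leaving P1
   (as xi -> -oo), tending to P2 (as xi -> +oo), with X > 0, Y > 0 throughout.
   Since l_c is the unique trajectory leaving P1 into the open first quadrant,
   this is equivalent to the existence of such a trajectory. *)
Definition connects_directly (n p q : nat) (k c : R) : Prop :=
  exists X Y : R -> R,
    tw_solution n p q k c X Y /\
    (forall t, 0 < X t /\ 0 < Y t) /\
    is_lim X m_infty 0 /\ is_lim Y m_infty 0 /\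
    is_lim X p_infty 1 /\ is_lim Y p_infty 0.

Definition is_critical_velocity (n p q : nat) (k cbar : R) : Prop :=
  is_lub (fun c => connects_directly n p q k c) cbar.

(* Main.v *)
Require Import Defs.
From Stdlib Require Import Reals Lra Lia Psatz.
From Coquelicot Require Import Coquelicot.
Open Scope R_scope.

Lemma der_cont f df x : is_derive f x df -> continuity_pt f x.
Proof. intros H. apply derivable_continuous_pt. exists df. apply is_derive_Reals; auto. Qed.

Lemma mvt_diff f df a b : (forall x, is_derive f x (df x)) -> a <= b ->
  exists c, a <= c <= b /\ f b - f a = df c * (b - a).
Proof.
  intros H Hab. destruct (MVT_gen f a b df) as [c [Hc E]].
  - intros; apply H.
  - intros; eapply der_cont; apply H.
  - rewrite Rmin_left in Hc by lra. rewrite Rmax_right in Hc by lra. eauto.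
Qed.

Lemma mono f df a b : (forall x, is_derive f x (df x)) ->
  (forall x, a <= x <= b -> 0 <= df x) -> a <= b -> f a <= f b.
Proof.
  intros H Hd Hab. destruct (mvt_diff f df a b H Hab) as [c [Hc E]].
  specialize (Hd c Hc). nra.
Qed.

Lemma smono f df a b : (forall x, is_derive f x (df x)) ->
  (forall x, 0 < df x) -> a < b -> f a < f b.
Proof.
  intros H Hd Hab. destruct (mvt_diff f df a b H) as [c [Hc E]]. lra.
  specialize (Hd c). nra.
Qed.

Lemma nonneg_from_right Z dZ : (forall t, is_derive Z t (dZ t)) ->
  (forall t, dZ t <= 0) -> is_lim Z p_infty 0 -> forall t, 0 <= Z t.
Proof.
  intros H Hd Hl t. destruct (Rle_or_lt 0 (Z t)) as [|Hn]; auto.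
  exfalso. apply is_lim_spec in Hl.
  destruct (Hl (mkposreal (- Z t) ltac:(lra))) as [M HM]. simpl in HM.
  set (s := Rmax M t + 1).
  assert (Hs : M < s) by (unfold s; generalize (Rmax_l M t); lra).
  specialize (HM s Hs).
  assert (Z s <= Z t).
  { assert (- Z t <= - Z s); [|lra].
    apply (mono (fun x => - Z x) (fun x => - dZ x)).
    - intros x; apply is_derive_Reals; apply derivable_pt_lim_opp; apply is_derive_Reals; auto.
    - intros x _; specialize (Hd x); lra.
    - unfold s; generalize (Rmax_r M t); lra. }
  rewrite Rminus_0_r in HM. apply Rabs_def2 in HM. lra.
Qed.

Lemma pos_from_left W dW : (forall t, is_derive W t (dW t)) ->
  (forall t, W t <= 0 -> dW t > 0) -> is_lim W m_infty 0 -> forall t, W t > 0.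
Proof.
  intros H Hd Hl t1. destruct (Rlt_or_le 0 (W t1)) as [|Hn]; auto.
  exfalso. pose proof (Hd t1 Hn) as Hd1.
  pose proof (H t1) as H1. apply is_derive_Reals in H1.
  destruct (H1 (dW t1 / 2) ltac:(lra)) as [del Hdel].
  set (h := - (del / 2)).
  assert (Hh : h <> 0) by (unfold h; destruct del; simpl; lra).
  assert (Hh2 : Rabs h < del) by (unfold h; destruct del; simpl; rewrite Rabs_Ropp, Rabs_pos_eq; lra).
  specialize (Hdel h Hh Hh2).
  assert (hneg : h < 0) by (unfold h; destruct del; simpl; lra).
  set (t2 := t1 + h).
  assert (W t2 < W t1).
  { apply Rabs_def2 in Hdel. destruct Hdel as [_ Hdel].
    assert (0 < (W (t1 + h) - W t1) / h) by lra.
    assert (Hq : (W (t1 + h) - W t1) = ((W (t1 + h) - W t1) / h) * h) by (field; auto).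
    unfold t2. nra. }
  apply is_lim_spec in Hl.
  destruct (Hl (mkposreal (- W t2) ltac:(lra))) as [M HM]. simpl in HM.
  set (T := Rmin M t2 - 1).
  assert (HT : T < M) by (unfold T; generalize (Rmin_l M t2); lra).
  assert (HT2 : T < t2) by (unfold T; generalize (Rmin_r M t2); lra).
  specialize (HM T HT). rewrite Rminus_0_r in HM. apply Rabs_def2 in HM.
  destruct (continuity_ab_min W T t1) as [mx [Hmx Hb]].
  { unfold t2 in HT2; lra. }
  { intros; eapply der_cont; apply H. }
  assert (Wmx : W mx <= W t2) by (apply Hmx; unfold t2 in *; lra).
  assert (HTm : T < mx).
  { destruct (Rle_lt_or_eq_dec T mx) as [|e]; [lra| auto| subst mx; lra]. }
  assert (Hmt : mx < t1).
  { destruct (Rle_lt_or_eq_dec mx t1) as [|e]; [lra| auto| rewrite e in Wmx; lra]. }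
  assert (pr : derivable_pt W mx).
  { exists (dW mx). apply is_derive_Reals; auto. }
  pose proof (deriv_minimum W T t1 mx pr HTm Hmt) as Hz.
  assert (derive_pt W mx pr = 0).
  { apply Hz. intros; apply Hmx; lra. }
  assert (derive_pt W mx pr = dW mx).
  { apply derive_pt_eq_0. apply is_derive_Reals; auto. }
  assert (dW mx > 0) by (apply Hd; lra). lra.
Qed.


Lemma cb_facts (J k cb : R) : 1 <= J -> k > (2 * (J+1) - 1) / ((J+1) * sqrt (J + 1 - 1)) ->
  cb = (k * (J+1) + sqrt (k ^ 2 * (J+1) ^ 2 - 4 * (J+1))) / (2 * (J+1)) ->
  0 < k /\ 0 < cb /\ k = ((J+1)*cb^2+1)/((J+1)*cb) /\ cb^2 * J > 1.
Proof.
  intros HJ Hk Hcb.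
  replace (J + 1 - 1) with J in Hk by ring.
  assert (Hs1 : 0 < sqrt J) by (apply sqrt_lt_R0; lra).
  assert (Hs1s : sqrt J * sqrt J = J) by (apply sqrt_sqrt; lra).
  set (s1 := sqrt J) in *.
  assert (Hk2 : k * ((J+1) * s1) > 2*(J+1) - 1).
  { apply Rmult_gt_reg_r with (/((J+1)*s1)).
    apply Rinv_0_lt_compat; nra.
    rewrite Rmult_assoc, Rinv_r by nra. rewrite Rmult_1_r. exact Hk. }
  assert (Hp : 0 < (J+1)*s1) by (apply Rmult_lt_0_compat; lra).
  assert (kpos : 0 < k).
  { destruct (Rle_or_lt k 0) as [h|h]; auto.
    assert (k * ((J+1)*s1) <= 0) by (apply Rmult_le_0_r; lra). lra. }
  set (D := k ^ 2 * (J+1) ^ 2 - 4 * (J+1)) in *.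
  assert (HD : 0 < D).
  { unfold D. assert (k^2*(J+1)^2*J > (2*J+1)^2).
    { assert (k*(J+1)*s1 > 2*J+1) by lra.
      assert ((k*(J+1)*s1)^2 > (2*J+1)^2) by nra.
      replace ((k*(J+1)*s1)^2) with (k^2*(J+1)^2*(s1*s1)) in H0 by ring.
      rewrite Hs1s in H0. lra. }
    nra. }
  assert (Hsd : sqrt D * sqrt D = D) by (apply sqrt_sqrt; lra).
  assert (Hsd0 : 0 <= sqrt D) by apply sqrt_pos.
  assert (cbpos : 0 < cb) by (rewrite Hcb; apply Rdiv_lt_0_compat; [apply Rplus_lt_le_0_compat; [apply Rmult_lt_0_compat; lra | lra] | lra]).
  assert (Q : (J+1)*cb^2 - k*(J+1)*cb + 1 = 0).
  { rewrite Hcb. field_simplify; [|lra]. replace (sqrt D ^ 2) with D by (simpl; rewrite Rmult_1_r, Hsd; ring).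
    unfold D; field; lra. }
  split; [lra|]. split; [lra|]. split.
  { field_simplify_eq; [|nra]. lra. }
  assert (H2cb : 2 * cb >= k).
  { assert (E : cb*(2*(J+1)) = k*(J+1)+sqrt D) by (rewrite Hcb; field; lra).
    nra. }
  set (z := cb * s1).
  assert (Qz : (J+1)*z^2 + J = k*(J+1)*s1*z).
  { unfold z. replace ((J+1)*(cb*s1)^2) with ((J+1)*cb^2*(s1*s1)) by ring.
    replace (k*(J+1)*s1*(cb*s1)) with (k*(J+1)*cb*(s1*s1)) by ring.
    rewrite Hs1s. apply Rminus_diag_uniq.
    replace ((J + 1) * cb ^ 2 * J + J - k * (J + 1) * cb * J) with (J*((J+1)*cb^2 - k*(J+1)*cb + 1)) by ring.
    rewrite Q; ring. }
  assert (Hz1 : (J+1)*z^2 - (2*J+1)*z + J > 0).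
  { assert (0 < z) by (unfold z; nra). nra. }
  assert (Hz2 : 2 * z * (J+1) > 2*J+1).
  { unfold z. nra. }
  assert (z > 1) by nra.
  assert (z^2 > 1) by nra.
  unfold z in H0. replace ((cb*s1)^2) with (cb^2*(s1*s1)) in H0 by ring.
  rewrite Hs1s in H0. lra.
Qed.


Lemma d_minus f g x a b : is_derive f x a -> is_derive g x b -> is_derive (fun y => f y - g y) x (a - b).
Proof. intros H1 H2; apply is_derive_Reals in H1; apply is_derive_Reals in H2; apply is_derive_Reals.
  exact (derivable_pt_lim_minus f g x a b H1 H2). Qed.
Lemma d_scal f x a c : is_derive f x a -> is_derive (fun y => c * f y) x (c * a).
Proof. intros H1; apply is_derive_Reals in H1; apply is_derive_Reals.
  exact (derivable_pt_lim_scal f c x a H1). Qed.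
Lemma d_const x c : is_derive (fun _ => c) x 0.
Proof. apply is_derive_Reals. exact (derivable_pt_lim_const c x). Qed.
Lemma d_div f g x a b : is_derive f x a -> is_derive g x b -> g x <> 0 ->
  is_derive (fun y => f y / g y) x ((a * g x - b * f x) / (g x)²).
Proof. intros H1 H2 H3; apply is_derive_Reals in H1; apply is_derive_Reals in H2; apply is_derive_Reals.
  exact (derivable_pt_lim_div f g x a b H1 H2 H3). Qed.
Lemma lim_minus f g x (a b:R) : is_lim f x a -> is_lim g x b -> is_lim (fun y => f y - g y) x (a - b).
Proof. intros. eapply is_lim_minus; eauto. reflexivity. Qed.
Lemma lim_scal f x (a b:R) : is_lim f x b -> is_lim (fun y => a * f y) x (a * b).
Proof. intros H. eapply is_lim_scal_l in H. exact H. Qed.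
Lemma lim_pow f x (a:R) j : is_lim f x a -> is_lim (fun y => f y ^ j) x (a ^ j).
Proof. intros H. apply (is_lim_comp_continuous f (fun z => z ^ j)); auto.
  apply (@ex_derive_continuous R_AbsRing R_NormedModule). auto_derive. auto. Qed.
Lemma lim_ext f g x (a b:R) : (forall y, f y = g y) -> a = b -> is_lim f x a -> is_lim g x b.
Proof. intros H E H1. subst. eapply is_lim_ext; eauto. Qed.

Lemma poly_ineq x j : 0 < x < 1 -> x * (1 - x ^ j) >= INR j * x ^ j * (1 - x).
Proof.
  intros Hx. induction j.
  - simpl. lra.
  - rewrite S_INR. simpl.
    assert (0 < x ^ j) by (apply pow_lt; lra).
    assert (x * x ^ j <= x ^ j) by nra.
    assert (INR j * (x * x ^ j) * (1 - x) <= INR j * x ^ j * (1 - x)).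
    { apply Rmult_le_compat_r; [lra|]. apply Rmult_le_compat_l; [apply pos_INR| lra]. }
    nra.
Qed.

Lemma exists_s a b : a < 1 -> b < 1 -> exists s, 0 < s < 1 /\ a < s /\ b < s.
Proof.
  intros. exists ((1 + Rmax (Rmax a b) 0)/2).
  pose proof (Rmax_l (Rmax a b) 0). pose proof (Rmax_r (Rmax a b) 0).
  pose proof (Rmax_l a b). pose proof (Rmax_r a b).
  assert (Rmax (Rmax a b) 0 < 1).
  { apply Rmax_lub_lt; [apply Rmax_lub_lt|]; lra. }
  lra.
Qed.

Lemma key_ineq (J k c cb K m s x y p dy : R) :
  0 < x < 1 -> 0 < y -> s < p -> p < 1 -> 0 < s ->
  x * (1 - p) >= J * p * (1 - x) ->
  y - cb * (x - x * p) > 0 ->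
  dy = c*y - k*(J+1)*p*y - x*p*p + x*p ->
  K = k*(J+1) - c -> m = cb * J -> 0 < k -> 0 < cb -> 1 <= J -> K < 2*m*s ->
  (dy*(1-x) - (-y)*y)/(1-x)² >= (m*s)^2 - K*(m*s) + J*s^2.
Proof.
  intros Hx Hy Hsp Hp1 Hs Hpoly HW Hdy HK Hm Hk Hcb HJ HKs.
  set (u := 1 - x). assert (Hu : 0 < u) by (unfold u; lra).
  assert (Hpu : x*(1-p) >= J*p*u) by (unfold u; lra).
  set (r := y / u). assert (Hyr : y = r * u) by (unfold r; field; lra).
  assert (Hr : 0 < r) by (unfold r; apply Rdiv_lt_0_compat; lra).
  assert (Hp : 0 < p) by lra.
  clearbody r.
  assert (E : (dy*u - (-y)*y)/u² = (c - k*(J+1)*p)*r + x*p*(1-p)/u + r^2).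
  { rewrite Hdy, Hyr. unfold Rsqr. field. lra. }
  rewrite E.
  assert (A : x*p*(1-p)/u >= J*p^2).
  { assert (x*p*(1-p) >= J*p^2*u).
    { assert (p*(x*(1-p)) >= p*(J*p*u)) by (apply Rle_ge, Rmult_le_compat_l; lra).
      replace (x*p*(1-p)) with (p*(x*(1-p))) by ring. replace (J*p^2*u) with (p*(J*p*u)) by ring. lra. }
    apply Rle_ge. apply Rmult_le_reg_r with u; auto.
    replace (x*p*(1-p)/u*u) with (x*p*(1-p)) by (field; lra). lra. }
  assert (B : (c - k*(J+1)*p)*r >= -K*r).
  { rewrite HK. assert (k*(J+1)*(1-p)*r >= 0).
    { apply Rle_ge. repeat apply Rmult_le_pos; lra. }
    nra. }
  assert (C : r > m*p).
  { assert (y > cb*J*p*u).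
    { assert (cb*(x*(1-p)) >= cb*(J*p*u)) by (apply Rle_ge, Rmult_le_compat_l; unfold u; lra).
      nra. }
    rewrite Hm. apply Rmult_gt_reg_r with u; auto.
    replace (r*u) with y by (rewrite Hyr; ring). lra. }
  assert (D : J*p^2 >= J*s^2).
  { apply Rle_ge. apply Rmult_le_compat_l; [lra|]. nra. }
  assert (Hm0 : 0 < m) by (rewrite Hm; nra).
  assert (E2 : r >= m*s) by nra.
  assert (r^2 - K*r >= (m*s)^2 - K*(m*s)).
  { assert ((r - m*s)*(r + m*s - K) >= 0) by (apply Rle_ge, Rmult_le_pos; lra).
    nra. }
  lra.
Qed.


Lemma upper (j : nat) (k cb c : R) (X Y : R -> R) :
  (1 <= j)%nat -> 0 < k -> 0 < cb -> k = ((INR j+1)*cb^2+1)/((INR j+1)*cb) -> cb^2 * INR j > 1 ->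
  (forall t, is_derive X t (Y t)) ->
  (forall t, is_derive Y t (c * Y t - k * (INR j + 1) * X t ^ j * Y t - X t * X t ^ j * X t ^ j + X t * X t ^ j)) ->
  (forall t, 0 < X t /\ 0 < Y t) ->
  is_lim X m_infty 0 -> is_lim Y m_infty 0 -> is_lim X p_infty 1 -> is_lim Y p_infty 0 ->
  c <= cb.
Proof.
  intros Hj Hk Hcb Hkdef Hcb2 HdX HdY Hpos HX0 HY0 HX1 HY1.
  destruct (Rle_or_lt c cb) as [|Hc]; auto. exfalso.
  set (J := INR j) in *.
  assert (HJ : 1 <= J) by (unfold J; apply (le_INR 1 j) in Hj; simpl in Hj; lra).
  set (dY := fun t => c * Y t - k * (J + 1) * X t ^ j * Y t - X t * X t ^ j * X t ^ j + X t * X t ^ j).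
  assert (Xle1 : forall t, 0 <= 1 - X t).
  { apply (nonneg_from_right (fun t => 1 - X t) (fun t => 0 - Y t)).
    - intros t. apply d_minus; [apply d_const| apply HdX].
    - intros t. destruct (Hpos t); lra.
    - apply (lim_ext (fun t => 1 - X t) _ _ (1 - 1)); [auto| ring|].
      apply lim_minus; [apply is_lim_const| auto]. }
  assert (Xlt1 : forall t, X t < 1).
  { intros t. assert (X t < X (t+1)).
    { apply (smono X Y); auto. intros; apply Hpos. lra. }
    specialize (Xle1 (t+1)). lra. }
  assert (Pb : forall t, 0 < X t ^ j < 1).
  { intros t. destruct (Hpos t). split. apply pow_lt; lra.
    apply pow_lt_1_compat; [split; [lra| apply Xlt1]| lia]. }
  assert (Wpos : forall t, Y t - cb * (X t - X t * X t ^ j) > 0).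
  { apply (pos_from_left (fun t => Y t - cb * (X t - X t ^ (S j)))
      (fun t => dY t - cb * (Y t - INR (S j) * Y t * X t ^ Init.Nat.pred (S j)))).
    - intros t. apply d_minus; [apply HdY|]. apply d_scal. apply d_minus; [apply HdX|].
      apply is_derive_pow. apply HdX.
    - intros t HW. simpl pow in HW. simpl Init.Nat.pred. rewrite S_INR. fold J. unfold dY.
      assert (E : c * Y t - k * (J + 1) * X t ^ j * Y t - X t * X t ^ j * X t ^ j + X t * X t ^ j -
         cb * (Y t - (J + 1) * Y t * X t ^ j) =
         (c - cb) * Y t - X t ^ j / cb * (Y t - cb * (X t - X t * X t ^ j))).
      { rewrite Hkdef. field. split; lra. }
      rewrite E. destruct (Hpos t). destruct (Pb t).
      assert (0 <= - (X t ^ j / cb * (Y t - cb * (X t - X t * X t ^ j)))).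
      { replace (- (X t ^ j / cb * (Y t - cb * (X t - X t * X t ^ j)))) with
          (X t ^ j / cb * (- (Y t - cb * (X t - X t * X t ^ j)))) by ring.
        apply Rmult_le_pos; [apply Rlt_le, Rdiv_lt_0_compat; lra| lra]. }
      assert (0 < (c - cb) * Y t) by (apply Rmult_lt_0_compat; lra).
      lra.
    - apply (lim_ext (fun t => Y t - cb * (X t - X t ^ S j)) _ _ (0 - cb * (0 - 0 ^ S j))); [auto| simpl; ring|].
      apply lim_minus; auto. apply lim_scal. apply lim_minus; auto. apply lim_pow; auto. }

  set (K := k*(J+1) - c). set (m := cb*J).
  assert (Hm0 : 0 < m) by (unfold m; nra).
  assert (kJ : k*(J+1) = J*cb + cb + 1/cb) by (rewrite Hkdef; field; lra).
  assert (inv_lt : 1/cb < m).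
  { unfold m. apply Rmult_lt_reg_r with cb; auto. replace (1/cb*cb) with 1 by (field; lra). nra. }
  assert (HK2m : K < 2*m) by (unfold K; fold m in kJ; unfold m in *; lra).
  assert (Hid : m^2 + J = (k*(J+1) - cb)*m) by (unfold m; rewrite Hkdef; field; lra).
  assert (HKm : K*m < m^2 + J).
  { rewrite Hid. apply Rmult_lt_compat_r; auto. unfold K; lra. }
  assert (Zpos : forall t, 0 <= K*(1 - X t) - Y t).
  { apply (nonneg_from_right (fun t => K*(1 - X t) - Y t) (fun t => K*(0 - Y t) - dY t)).
    - intros t. apply d_minus; [|apply HdY]. apply d_scal. apply d_minus; [apply d_const| apply HdX].
    - intros t. unfold dY, K. destruct (Hpos t). destruct (Pb t).
      assert (E : (k * (J + 1) - c) * (0 - Y t) -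
        (c * Y t - k * (J + 1) * X t ^ j * Y t - X t * X t ^ j * X t ^ j + X t * X t ^ j)
        = - (k*(J+1)*(1 - X t ^ j)*Y t + X t * X t ^ j * (1 - X t ^ j))) by ring.
      rewrite E.
      assert (0 <= k*(J+1)*(1 - X t ^ j)*Y t) by (repeat apply Rmult_le_pos; lra).
      assert (0 <= X t * X t ^ j * (1 - X t ^ j)) by (repeat apply Rmult_le_pos; lra).
      lra.
    - apply (lim_ext (fun t => K*(1 - X t) - Y t) _ _ (K*(1-1) - 0)); [auto| ring|].
      apply lim_minus; auto. apply lim_scal. apply lim_minus; auto. apply is_lim_const. }
  destruct (exists_s (K/(2*m)) (K*m/(m^2+J))) as [s [Hs [Hs1 Hs2]]].
  { apply Rmult_lt_reg_r with (2*m); [lra|]. replace (K/(2*m)*(2*m)) with K by (field; lra). lra. }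
  { apply Rmult_lt_reg_r with (m^2+J); [nra|]. replace (K*m/(m^2+J)*(m^2+J)) with (K*m) by (field; nra). lra. }
  assert (HKs : K < 2*m*s).
  { replace K with (K/(2*m)*(2*m)) by (field; lra). nra. }
  assert (HKms : K*m < (m^2+J)*s).
  { replace (K*m) with (K*m/(m^2+J)*(m^2+J)) by (field; nra). nra. }
  set (delta := (m*s)^2 - K*(m*s) + J*s^2).
  assert (Hdelta : 0 < delta).
  { replace delta with (s*((m^2+J)*s - K*m)) by (unfold delta; ring).
    apply Rmult_lt_0_compat; lra. }
  assert (HP1 := lim_pow X p_infty 1 j HX1). rewrite pow1 in HP1.
  apply is_lim_spec in HP1. destruct (HP1 (mkposreal (1 - s) ltac:(lra))) as [M HM]. simpl in HM.
  assert (Ps : forall t, M < t -> s < X t ^ j).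
  { intros t Ht. specialize (HM t Ht). apply Rabs_def2 in HM. lra. }
  set (dR := fun t => (dY t * (1 - X t) - (0 - Y t) * Y t) / (1 - X t)²).
  assert (HdR : forall t, is_derive (fun t => Y t / (1 - X t)) t (dR t)).
  { intros t. apply (d_div Y (fun t => 1 - X t)); [apply HdY| |].
    - apply d_minus; [apply d_const| apply HdX].
    - specialize (Xlt1 t); lra. }
  assert (dRge : forall t, M < t -> dR t >= delta).
  { intros t Ht. unfold dR. replace (0 - Y t) with (- Y t) by ring.
    destruct (Hpos t). destruct (Pb t).
    apply (key_ineq J k c cb K m s (X t) (Y t) (X t ^ j) (dY t)); auto.
    all: try lra.
    all: try (split; auto).
    all: try (generalize (poly_ineq (X t) j ltac:(split; auto)); fold J; lra).
    all: try (unfold dY; ring). }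
  set (t1 := M + 1). set (t2 := t1 + 1 + Rabs K / delta).
  assert (Hgrow : Y t1 / (1 - X t1) - delta * t1 <= Y t2 / (1 - X t2) - delta * t2).
  { apply (mono (fun t => Y t / (1 - X t) - delta * t) (fun t => dR t - delta * 1)).
    - intros t. apply d_minus; [apply HdR|]. apply d_scal.
      apply is_derive_Reals, derivable_pt_lim_id.
    - intros t Ht. assert (dR t >= delta) by (apply dRge; unfold t1 in Ht; lra). lra.
    - unfold t2. assert (0 <= Rabs K / delta) by (apply Rmult_le_pos; [apply Rabs_pos| apply Rlt_le, Rinv_0_lt_compat; auto]). lra. }
  assert (Hr1 : 0 < Y t1 / (1 - X t1)).
  { destruct (Hpos t1). specialize (Xlt1 t1). apply Rdiv_lt_0_compat; lra. }
  assert (Hr2 : Y t2 / (1 - X t2) <= K).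
  { specialize (Zpos t2). specialize (Xlt1 t2).
    apply Rmult_le_reg_r with (1 - X t2); [lra|].
    replace (Y t2 / (1 - X t2) * (1 - X t2)) with (Y t2) by (field; lra). lra. }
  assert (E : delta * (t2 - t1) = delta + Rabs K) by (unfold t2; field; lra).
  generalize (Rle_abs K). nra.
Qed.


Lemma pow_exp a j : exp a ^ j = exp (INR j * a).
Proof. induction j. simpl. rewrite Rmult_0_l, exp_0. auto.
  rewrite S_INR. simpl. rewrite IHj, <- exp_plus. f_equal. ring. Qed.

Lemma lin_lim (a : R) : a > 0 -> is_lim (fun t => -(a*t)) m_infty p_infty /\ is_lim (fun t => -(a*t)) p_infty m_infty.
Proof.
  intros Ha. split.
  - apply (is_lim_ext (fun t => (-a) * t)); [intros; ring|].
    replace p_infty with (Rbar_mult (-a) m_infty).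
    apply is_lim_scal_l, is_lim_id.
    apply is_Rbar_mult_unique, is_Rbar_mult_sym, is_Rbar_mult_m_infty_neg. simpl; lra.
  - apply (is_lim_ext (fun t => (-a) * t)); [intros; ring|].
    replace m_infty with (Rbar_mult (-a) p_infty).
    apply is_lim_scal_l, is_lim_id.
    apply is_Rbar_mult_unique, is_Rbar_mult_sym, is_Rbar_mult_p_infty_neg. simpl; lra.
Qed.

Lemma exist_sol (j : nat) (k cb : R) :
  (1 <= j)%nat -> 0 < cb -> k = ((INR j+1)*cb^2+1)/((INR j+1)*cb) ->
  exists X Y : R -> R,
  (forall t, is_derive X t (Y t)) /\
  (forall t, is_derive Y t (cb * Y t - k * (INR j + 1) * X t ^ j * Y t - X t * X t ^ j * X t ^ j + X t * X t ^ j)) /\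
  (forall t, 0 < X t /\ 0 < Y t) /\
  is_lim X m_infty 0 /\ is_lim Y m_infty 0 /\ is_lim X p_infty 1 /\ is_lim Y p_infty 0.
Proof.
  intros Hj Hcb Hkdef.
  set (J := INR j) in *.
  assert (HJ : 1 <= J) by (unfold J; apply (le_INR 1 j) in Hj; simpl in Hj; lra).
  set (m := cb * J). assert (Hm : 0 < m) by (unfold m; nra).
  set (F := fun e => exp (- ln (1 + e) / J)).
  set (X := fun t => F (exp (-(m*t)))).
  set (Y := fun t => cb * (X t - X t ^ S j)).
  assert (HP : forall t, X t ^ j = / (1 + exp (-(m*t)))).
  { intros t. unfold X, F. rewrite pow_exp. fold J.
    replace (J * (- ln (1 + exp (- (m * t))) / J)) with (- ln (1 + exp (- (m * t)))) by (field; lra).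
    rewrite exp_Ropp, exp_ln; auto. generalize (exp_pos (-(m*t))); lra. }
  assert (HdX : forall t, is_derive X t (Y t)).
  { intros t. unfold Y. simpl pow. rewrite HP. unfold X, F. auto_derive.
    - generalize (exp_pos (-(m*t))); lra.
    - unfold m. unfold Rdiv. set (e := exp (- (cb * J * t))). set (x := exp (- ln (1 + e) * / J)). assert (0 < e) by apply exp_pos. field. lra. }

  assert (HdY : forall t, is_derive Y t (cb * Y t - k * (J + 1) * X t ^ j * Y t - X t * X t ^ j * X t ^ j + X t * X t ^ j)).
  { intros t.
    assert (H := d_scal _ t _ cb (d_minus _ _ t _ _ (HdX t) (is_derive_pow X (S j) t _ (HdX t)))).
    simpl Init.Nat.pred in H. rewrite S_INR in H. fold J in H.
    match goal with |- is_derive _ _ ?v => replace v with (cb * (Y t - (J + 1) * Y t * X t ^ j)); [exact H|] end.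
    unfold Y. simpl pow. rewrite Hkdef. set (p := X t ^ j). set (x := X t). field. lra. }
  assert (Hpos : forall t, 0 < X t /\ 0 < Y t).
  { intros t. assert (HX : 0 < X t) by (unfold X, F; apply exp_pos).
    split; auto.
    assert (Hp : X t ^ j < 1).
    { rewrite HP. rewrite <- Rinv_1. generalize (exp_pos (-(m*t))); intros.
      apply Rinv_lt_contravar; lra. }
    unfold Y. simpl pow. assert (0 < X t * (1 - X t ^ j)) by (apply Rmult_lt_0_compat; lra). nra. }
  destruct (lin_lim m Hm) as [Lm Lp].
  assert (HE1 : is_lim (fun t => exp (-(m*t))) p_infty 0).
  { apply (is_lim_comp exp (fun t => -(m*t)) p_infty 0 m_infty); auto.
    apply is_lim_exp_m. exists 0. intros; discriminate. }
  assert (HEm : is_lim (fun t => exp (-(m*t))) m_infty p_infty).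
  { apply (is_lim_comp exp (fun t => -(m*t)) m_infty p_infty p_infty); auto.
    apply is_lim_exp_p. exists 0. intros; discriminate. }
  assert (HX1 : is_lim X p_infty 1).
  { replace (Finite 1) with (Finite (F 0)).
    apply (is_lim_comp_continuous (fun t => exp (-(m*t))) F p_infty 0); auto.
    apply (@ex_derive_continuous R_AbsRing R_NormedModule). unfold F. auto_derive. lra.
    unfold F. rewrite Rplus_0_r, ln_1. f_equal. replace (-0/J) with 0 by (field; lra). apply exp_0. }
  assert (HX0 : is_lim X m_infty 0).
  { assert (H1E : is_lim (fun t => 1 + exp (-(m*t))) m_infty p_infty).
    { eapply is_lim_plus; [apply is_lim_const| apply HEm| reflexivity]. }
    assert (HL : is_lim (fun t => ln (1 + exp (-(m*t)))) m_infty p_infty).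
    { apply (is_lim_comp ln (fun t => 1 + exp (-(m*t))) m_infty p_infty p_infty); auto.
      apply is_lim_ln_p. exists 0. intros; discriminate. }
    assert (HA : is_lim (fun t => - ln (1 + exp (-(m*t))) / J) m_infty m_infty).
    { apply (is_lim_ext (fun t => (- / J) * ln (1 + exp (-(m*t))))); [intros; unfold Rdiv; ring|].
      assert (Hr : Rbar_mult (- / J) p_infty = m_infty).
      { apply is_Rbar_mult_unique, is_Rbar_mult_sym, is_Rbar_mult_p_infty_neg. simpl.
        assert (0 < / J) by (apply Rinv_0_lt_compat; lra). lra. }
      pose proof (is_lim_scal_l _ (-/J) m_infty p_infty HL) as H2. rewrite Hr in H2. exact H2. }
    apply (is_lim_comp exp (fun t => - ln (1 + exp (-(m*t))) / J) m_infty 0 m_infty); auto.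
    apply is_lim_exp_m. exists 0. intros; discriminate. }
  exists X, Y. split; [auto|]. split; [auto|]. split; [auto|]. split; [auto|].
  split; [|split; [auto|]].
  - apply (lim_ext (fun t => cb * (X t - X t ^ S j)) _ _ (cb * (0 - 0 ^ S j))); [auto| simpl; ring|].
    apply lim_scal, lim_minus; auto. apply lim_pow; auto.
  - apply (lim_ext (fun t => cb * (X t - X t ^ S j)) _ _ (cb * (1 - 1 ^ S j))); [auto| rewrite pow1; ring|].
    apply lim_scal, lim_minus; auto. apply lim_pow; auto.
Qed.


Theorem mainTheorem13 (n : nat) (k : R) :
  (2 <= n)%nat ->
  k > (2 * INR n - 1) / (INR n * sqrt (INR n - 1)) ->
  is_critical_velocity n (2 * n - 1)%nat n k
    ((k * INR n + sqrt (k ^ 2 * INR n ^ 2 - 4 * INR n)) / (2 * INR n)).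
Proof.
  intros Hn Hk. destruct n as [|j]; [lia|].
  assert (Hj : (1 <= j)%nat) by lia.
  assert (HJ : 1 <= INR j) by (apply (le_INR 1 j) in Hj; simpl in Hj; lra).
  rewrite S_INR in *.
  match goal with |- is_critical_velocity _ _ _ _ ?v => remember v as cb eqn:Hcb end.
  destruct (cb_facts (INR j) k cb HJ Hk Hcb) as [kpos [cbpos [Hkdef Hcb2]]].
  replace (2 * S j - 1)%nat with (S (j + j)) by lia.
  unfold is_critical_velocity. split.
  - intros c Hconn. destruct Hconn as [X [Y [Htw [Hpos [H1 [H2 [H3 H4]]]]]]].
    apply (upper j k cb c X Y); auto.
    + intros t; apply (Htw t).
    + intros t. destruct (Htw t) as [_ HY]. rewrite S_INR in HY.
      replace (S j - 1)%nat with j in HY by lia.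
      replace (X t ^ S (j+j)) with (X t * X t ^ j * X t ^ j) in HY by (simpl; rewrite pow_add; ring).
      exact HY.
  - intros b Hb. apply Hb.
    destruct (exist_sol j k cb Hj cbpos Hkdef) as [X [Y [HdX [HdY [Hpos [H1 [H2 [H3 H4]]]]]]]].
    exists X, Y. split; [|split; [auto| auto]].
    intros t. split; [auto|]. rewrite S_INR.
    replace (S j - 1)%nat with j by lia.
    replace (X t ^ S (j+j)) with (X t * X t ^ j * X t ^ j) by (simpl; rewrite pow_add; ring).
    apply HdY.
Qed.
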